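(* Let $(X,d,A)$ be a metric pair. A set $S\subset(\overline{D}_\infty(X,A),W_\infty)$ is totally bounded if and only if $S$ is uniformly upper finite and upper totally bounded. For $p\in[1,\infty)$, a set $S\subset(\overline{D}_p(X,A),W_p)$ is totally bounded if and only if $S$ is uniformly upper finite, upper totally bounded, and uniformly $p$-vanishing.
   Context: A metric on $X$ is a map $d:X\times X\to[0,\infty]$ with $d(x,x)=0$, symmetry and the triangle inequality (infinite distances allowed, $d(x,y)=0$ need not imply $x=y$); a metric pair $(X,d,A)$ is such a space with a closed subset $A$. Write $d(x,A)=\inf_{a\in A}d(x,a)$, $A^\delta=\{x:d(x,A)<\delta\}$ for $\delta\in(0,\infty]$. $\overline{D}(X,A)$ is the set of countable formal sums $\hat\alpha=\sum_{i\in I}x_i$ of points of $X\setminus A$ (repetitions allowed); $0$ the empty sum; $|\alpha|=|I|$; the support of $\alpha$ is the set of points appearing in $\hat\alpha$. A matching of $\hat\alpha=\sum_{i\in I}x_i$, $\hat\beta=\sum_{j\in J}y_j$ is a formal sum $\sum_{k\in K}(x_k,y_{\varphi(k)})+\sum_{i\in I\setminus K}(x_i,z_i)+\sum_{j\in J\setminus\varphi(K)}(w_j,y_j)$ with $K\subset I$, $\varphi$ injective, $z_i,w_j\in A$; its $p$-cost is the $\ell^p$ norm (sup norm if $p=\infty$) of the distances of paired points; $W_p$ is the infimum of $p$-costs. $u_\delta(\alpha)$, $\ell_\delta(\alpha)$ are the restrictions of $\hat\alpha$ to $X\setminus A^\delta$ and to $A^\delta\setminus A$. For $p<\infty$, $\overline{D}_p(X,A)=\{\alpha: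 |u_\infty(\alpha)|<\infty,\ W_p(\ell_\infty(\alpha),0)<\infty\}$; $\overline{D}_\infty(X,A)=\{\alpha:|u_\delta(\alpha)|<\infty\ \forall\delta>0\}$. A subset $T$ of a metric space is totally bounded if for each $\varepsilon>0$ there is a finite set $\{t_1,\dots,t_n\}\subset T$ with $T\subset\bigcup_i B_\varepsilon(t_i)$. For $S\subset\overline{D}(X,A)$: $S$ is uniformly upper finite if for every $\varepsilon>0$ there is $M_\varepsilon\ge0$ with $|u_\varepsilon(\alpha)|\le M_\varepsilon$ for all $\alpha\in S$; $S$ is upper totally bounded if for every $\varepsilon>0$ the set $u_\varepsilon(S)=\bigcup_{\alpha\in S}\mathrm{supp}(u_\varepsilon(\alpha))\subset X$ is totally bounded in $(X,d)$; $S$ is uniformly $p$-vanishing if for every $\varepsilon>0$ there is $\delta>0$ with $W_p(\ell_\delta(\alpha),0)<\varepsilon$ for all $\alpha\in S$. *)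

(* Defs.v *)
From mathcomp Require Import all_boot all_order all_algebra.
From mathcomp Require Import all_classical all_reals all_analysis.
Set Implicit Arguments. Unset Strict Implicit. Unset Printing Implicit Defensive.
Import Order.TTheory GRing.Theory Num.Theory.
Local Open Scope classical_set_scope.
Local Open Scope ring_scope.

Section PersistenceDiagrams.
Variables (R : realType) (X : Type) (d : X -> X -> \bar R) (A : set X).

Definition is_metric : Prop :=
  [/\ forall x, d x x = 0%E,
      forall x y, (0 <= d x y)%E,
      forall x y, d x y = d y x &
      forall x y z, (d x z <= d x y + d y z)%E].

(* d(x, A) = inf_{a in A} d(x, a)  (= +oo when A is empty) *)
Definition distA (x : X) : \bar R := ereal_inf [set d x a | a in A].

(* A is closed in the (extended pseudo)metric topology: contains every point
   at distance 0 from it (i.e. every point whose balls all meet A). *)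
Definition closed_in_metric : Prop := forall x, distA x = 0%E -> A x.

(* A countable formal sum of points of X \ A: a countable index set
   (a subset of nat) together with the points indexed by it. *)
Record diagram := Diagram {
  dI : set nat;
  dx : nat -> X;
  dxA : forall i, dI i -> ~ A (dx i) }.

Program Definition restrict (P : X -> Prop) (a : diagram) : diagram :=
  @Diagram [set i | dI a i /\ P (dx a i)] (dx a) _.
Next Obligation. by move=> P a i [/dxA]. Qed.

(* u_delta(alpha): restriction to X \ A^delta = {x | d(x,A) >= delta},
   delta in (0, +oo]. *)
Definition u_ (delta : \bar R) (a : diagram) : diagram :=
  restrict (fun x => (delta <= distA x)%E) a.
(* l_delta(alpha): restriction to A^delta \ A = {x | d(x,A) < delta} \ A. *)
Definition l_ (delta : \bar R) (a : diagram) : diagram :=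
  restrict (fun x => (distA x < delta)%E) a.

(* Matchings between a = sum_{i in I} x_i and b = sum_{j in J} y_j:
   K subset of I, phi injective on K with phi(K) in J, points z_i in A for
   i in I \ K and w_j in A for j in J \ phi(K). *)
Definition is_matching (a b : diagram) (K : set nat) (phi : nat -> nat)
    (z w : nat -> X) : Prop :=
  [/\ K `<=` dI a,
      (forall i j, K i -> K j -> phi i = phi j -> i = j),
      phi @` K `<=` dI b,
      (forall i, dI a i -> ~ K i -> A (z i)) &
      (forall j, dI b j -> ~ (phi @` K) j -> A (w j))].

Definition pcost (p : R) (a b : diagram) (K : set nat) (phi : nat -> nat)
    (z w : nat -> X) : \bar R :=
  poweR ((\esum_(k in K) poweR (d (dx a k) (dx b (phi k))) p)
       + (\esum_(i in dI a `\` K) poweR (d (dx a i) (z i)) p)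
       + (\esum_(j in dI b `\` (phi @` K)) poweR (d (w j) (dx b j)) p))%E p^-1.

Definition infcost (a b : diagram) (K : set nat) (phi : nat -> nat)
    (z w : nat -> X) : \bar R :=
  ereal_sup ([set 0%E]
    `|` [set d (dx a k) (dx b (phi k)) | k in K]
    `|` [set d (dx a i) (z i) | i in dI a `\` K]
    `|` [set d (w j) (dx b j) | j in dI b `\` (phi @` K)]).

Definition Wp (p : R) (a b : diagram) : \bar R :=
  ereal_inf [set c | exists K phi z w,
     is_matching a b K phi z w /\ c = pcost p a b K phi z w].

Definition Winf (a b : diagram) : \bar R :=
  ereal_inf [set c | exists K phi z w,
     is_matching a b K phi z w /\ c = infcost a b K phi z w].

(* The empty formal sum 0 (the dummy point map is irrelevant). *)
Program Definition zero_of (a : diagram) : diagram :=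
  @Diagram set0 (dx a) _.
Next Obligation. by []. Qed.

Definition finite_diag (a : diagram) : Prop := finite_set (dI a).

Definition Dp (p : R) : set diagram :=
  [set a | finite_diag (u_ +oo%E a) /\ (Wp p (l_ +oo%E a) (zero_of a) < +oo)%E].

Definition Dinf : set diagram :=
  [set a | forall delta : R, 0 < delta -> finite_diag (u_ delta%:E a)].

Definition totally_bounded_wrt {T : Type} (dist : T -> T -> \bar R)
    (S : set T) : Prop :=
  forall eps : R, 0 < eps -> exists F : set T,
    [/\ finite_set F, F `<=` S &
        S `<=` \bigcup_(t in F) [set s | (dist t s < eps%:E)%E]].

Definition unif_upper_finite (S : set diagram) : Prop :=
  forall eps : R, 0 < eps -> exists M : nat,
    forall a, S a -> (dI (u_ eps%:E a) #<= `I_M)%card.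

Definition upper_totally_bounded (S : set diagram) : Prop :=
  forall eps : R, 0 < eps ->
    totally_bounded_wrt d
      [set x | exists2 a, S a & exists2 i, dI (u_ eps%:E a) i & x = dx a i].

Definition unif_p_vanishing (p : R) (S : set diagram) : Prop :=
  forall eps : R, 0 < eps -> exists2 delta : R, 0 < delta &
    forall a, S a -> (Wp p (l_ delta%:E a) (zero_of a) < eps%:E)%E.

End PersistenceDiagrams.

(* Main.v *)
Require Import Defs.
From mathcomp Require Import all_boot all_order all_algebra.
From mathcomp Require Import all_classical all_reals all_analysis.
From mathcomp Require Import finmap.
From mathcomp Require Import ring lra.
Set Implicit Arguments. Unset Strict Implicit. Unset Printing Implicit Defensive.
Import Order.TTheory GRing.Theory Num.Theory.
Local Open Scope classical_set_scope.
Local Open Scope ring_scope.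

Section Basic.
Variables (R : realType) (X : Type) (d : X -> X -> \bar R) (A : set X).
Hypothesis hd : is_metric d.
Local Open Scope ereal_scope.

Lemma d0 x : d x x = 0. Proof. by case: hd. Qed.
Lemma dge0 x y : 0 <= d x y. Proof. by case: hd. Qed.
Lemma dC x y : d x y = d y x. Proof. by case: hd. Qed.
Lemma dtri x y z : d x z <= d x y + d y z. Proof. by case: hd. Qed.

Lemma distA_ge0 x : 0 <= distA d A x.
Proof. by apply: le_ereal_inf_tmp => _ [a _ <-]; exact: dge0. Qed.

Lemma distA_le x a : A a -> distA d A x <= d x a.
Proof. by move=> Aa; apply: ereal_inf_lbound; exists a. Qed.

Lemma distA_lt x (r : \bar R) : distA d A x < r -> exists2 a, A a & d x a < r.
Proof. by move=> /ereal_inf_lt[_ [a Aa <-] h]; exists a. Qed.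

Lemma distA_tri x y : distA d A x <= d x y + distA d A y.
Proof.
case Hxy: (d x y) => [r| |].
- rewrite addeC -leeBlDr //; apply: le_ereal_inf_tmp => _ [a Aa <-].
  rewrite leeBlDr // addeC -Hxy; apply: le_trans (dtri x y a).
  exact: distA_le.
- by rewrite addye ?leey // gt_eqF // (lt_le_trans _ (distA_ge0 y)) ?ltNye.
- by have := dge0 x y; rewrite Hxy.
Qed.

End Basic.

Section Pow.
Variable R : realType.
Local Open Scope ereal_scope.
Implicit Types (x y : \bar R).

Lemma powe_le (p : R) x y : (0 <= p)%R -> 0 <= x -> x <= y -> poweR x p <= poweR y p.
Proof.
move=> p0 x0 xy; apply: gt0_ler_poweR => //; rewrite in_itv /= ?x0 ?leey //.
by rewrite (le_trans x0 xy).
Qed.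

Lemma powe_lt (p : R) x y : (0 < p)%R -> 0 <= x -> x < y -> poweR x p < poweR y p.
Proof.
move=> p0; case: x => [x| |]; case: y => [y| |] //= x0 xy.
- rewrite lte_fin gt0_ltr_powR // nnegrE -?lee_fin //.
  by rewrite ltW // (le_lt_trans x0 xy).
- by rewrite gt_eqF // ltry.
Qed.

Lemma powe_lt_inv (p : R) x y : (0 <= p)%R -> 0 <= y -> poweR x p < poweR y p -> x < y.
Proof.
move=> p0 y0 h; rewrite ltNge; apply/negP => yx.
by move: h; rewrite ltNge powe_le.
Qed.

Lemma powe_inv (p : R) x : (0 < p)%R -> 0 <= x -> poweR (poweR x p^-1) p = x.
Proof. by move=> p0 x0; rewrite -poweRrM mulVf ?gt_eqF // poweRe1. Qed.

Lemma root_lt (p r : R) x : (0 < p)%R -> (0 < r)%R -> 0 <= x ->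
  poweR x p^-1 < r%:E -> x < (r `^ p)%:E.
Proof.
move=> p0 r0 x0 h; rewrite -(powe_inv p0 x0) -poweR_EFin.
by apply: powe_lt => //; exact: poweR_ge0.
Qed.

Lemma root_lt' (p r : R) x : (0 < p)%R -> (0 < r)%R -> 0 <= x ->
  x < (r `^ p)%:E -> poweR x p^-1 < r%:E.
Proof.
move=> p0 r0 x0 h; have -> : r%:E = poweR ((r `^ p)%:E) p^-1.
  by rewrite poweR_EFin -powRrM mulfV ?gt_eqF // powRr1 // ltW.
by apply: powe_lt => //; rewrite invr_gt0.
Qed.

Lemma powe_addle (p : R) x y : (0 < p)%R -> 0 <= x -> 0 <= y ->
  poweR (x + y) p <= (2 `^ p)%:E * (poweR x p + poweR y p).
Proof.
move=> p0 x0 y0.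
have hm : poweR (x + y) p <= poweR (2%:E * maxe x y) p.
  apply: powe_le; first exact: ltW.
    exact: adde_ge0.
  by rewrite (mule_natl _ 2) mule2n leeD // ?le_max ?lexx ?orbT.
apply: (le_trans hm); rewrite poweRM ?le_max ?x0 // poweR_EFin.
apply: lee_wpmul2l; first by rewrite lee_fin powR_ge0.
rewrite /maxe; case: ifP => _.
- by rewrite leeDr // poweR_ge0.
- by rewrite leeDl // poweR_ge0.
Qed.

End Pow.


Section Match.
Variables (R : realType) (X : Type) (d : X -> X -> \bar R) (A : set X).
Hypothesis hd : is_metric d.
Local Open Scope ereal_scope.

Definition good (a b : diagram A) K phi z w (rho : \bar R) :=
  is_matching a b K phi z w /\
  [/\ forall k, K k -> d (dx a k) (dx b (phi k)) < rho,
      forall i, dI a i -> ~ K i -> d (dx a i) (z i) < rho &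
      forall j, dI b j -> ~ (phi @` K) j -> d (w j) (dx b j) < rho].

Lemma esum_term (P : set nat) (f : nat -> \bar R) k :
  P k -> (forall i, P i -> 0 <= f i) -> f k <= \esum_(i in P) f i.
Proof.
move=> Pk f0; apply: esum_ge; exists [set k].
  by split; [exact: finite_set1 | move=> i ->].
by rewrite fsbig_set1.
Qed.

Lemma Winf_good a b rho : Winf d a b < rho ->
  exists K phi z w, good a b K phi z w rho.
Proof.
move=> /ereal_inf_lt[_ [K [phi [z [w [hm ->]]]]] hlt].
exists K, phi, z, w; split => //; split.
- move=> k Kk; apply: le_lt_trans hlt; apply: ereal_sup_ubound.
  by left; left; right; exists k.
- move=> i ai nK; apply: le_lt_trans hlt; apply: ereal_sup_ubound.
  by left; right; exists i.
- move=> j bj nj; apply: le_lt_trans hlt; apply: ereal_sup_ubound.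
  by right; exists j.
Qed.

Definition sum1 (p : R) (a b : diagram A) K phi :=
  \esum_(k in K) poweR (d (dx a k) (dx b (phi k))) p.
Definition sum2 (p : R) (a : diagram A) K (z : nat -> X) :=
  \esum_(i in dI a `\` K) poweR (d (dx a i) (z i)) p.
Definition sum3 (p : R) (b : diagram A) K (phi : nat -> nat) (w : nat -> X) :=
  \esum_(j in dI b `\` phi @` K) poweR (d (w j) (dx b j)) p.

Lemma pcostE p a b K phi z w :
  pcost d p a b K phi z w = poweR (sum1 p a b K phi + sum2 p a K z + sum3 p b K phi w) p^-1.
Proof. by []. Qed.

Lemma sum1_ge0 p a b K phi : 0 <= sum1 p a b K phi.
Proof. by apply: esum_ge0 => *; exact: poweR_ge0. Qed.
Lemma sum2_ge0 p a K z : 0 <= sum2 p a K z.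
Proof. by apply: esum_ge0 => *; exact: poweR_ge0. Qed.
Lemma sum3_ge0 p b K phi w : 0 <= sum3 p b K phi w.
Proof. by apply: esum_ge0 => *; exact: poweR_ge0. Qed.

Lemma Wp_good (p rho : R) a b : (0 < p)%R -> (0 < rho)%R ->
  Wp d p a b < rho%:E -> exists K phi z w, good a b K phi z w rho%:E /\
   sum1 p a b K phi + sum2 p a K z + sum3 p b K phi w < (rho `^ p)%:E.
Proof.
move=> p0 r0 /ereal_inf_lt[_ [K [phi [z [w [hm ->]]]]]].
rewrite pcostE => /root_lt => /(_ p0 r0).
have s1 := sum1_ge0 p a b K phi; have s2 := sum2_ge0 p a K z.
have s3 := sum3_ge0 p b K phi w.
move=> /(_ (adde_ge0 (adde_ge0 s1 s2) s3)) htot.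
exists K, phi, z, w; split => //; split => //.
have key : forall e, 0 <= e -> poweR e p <= sum1 p a b K phi + sum2 p a K z + sum3 p b K phi w ->
    e < rho%:E.
  move=> e e0 he; apply: (@powe_lt_inv _ p); [exact: ltW | by rewrite lee_fin ltW |].
  by rewrite poweR_EFin; apply: le_lt_trans htot.
split.
- move=> k Kk; apply: key; first exact: dge0.
  apply: le_trans (leeDl _ s3); apply: le_trans (leeDl _ s2).
  by apply: (esum_term (f := fun k => poweR (d (dx a k) (dx b (phi k))) p)) => // *;
    exact: poweR_ge0.
- move=> i ai nK; apply: key; first exact: dge0.
  apply: le_trans (leeDl _ s3); apply: le_trans (leeDr _ s1).
  by apply: (esum_term (f := fun i => poweR (d (dx a i) (z i)) p)) => // *;
    exact: poweR_ge0.
- move=> j bj nj; apply: key; first exact: dge0.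
  apply: le_trans (leeDr _ (adde_ge0 s1 s2)).
  by apply: (esum_term (f := fun j => poweR (d (w j) (dx b j)) p)) => // *;
    exact: poweR_ge0.
Qed.

Lemma Wp_zero_wit (p : R) (a b : diagram A) rho : (0 < p)%R ->
  Wp d p a (zero_of b) < rho -> exists z, (forall i, dI a i -> A (z i)) /\
  poweR (\esum_(i in dI a) poweR (d (dx a i) (z i)) p) p^-1 < rho.
Proof.
move=> p0 /ereal_inf_lt[_ [K [phi [z [w [hm ->]]]]]].
case: hm => hK _ himg hz _.
have K0 : K = set0.
  by apply/seteqP; split => // k Kk; have := himg (phi k) (ex_intro2 _ _ k Kk erefl).
move=> h; exists z; split.
  by move=> i ai; apply: hz => //; rewrite K0.
move: h; rewrite pcostE /sum1 /sum2 /sum3 K0 image_set0 setD0 set0D !esum_set0.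
by rewrite add0e adde0.
Qed.

Lemma Wp_zero_le (p : R) (a b : diagram A) z : (forall i, dI a i -> A (z i)) ->
  Wp d p a (zero_of b) <= poweR (\esum_(i in dI a) poweR (d (dx a i) (z i)) p) p^-1.
Proof.
move=> hz; apply: ereal_inf_lbound; exists set0, id, z, z; split.
  split; [by [] | by move=> i j [] | by move=> _ [i []] | | by move=> j []].
  by move=> i ai _; exact: hz.
by rewrite pcostE /sum1 /sum2 /sum3 image_set0 setD0 set0D !esum_set0 add0e adde0.
Qed.

Lemma set_l_u (delta : \bar R) (a : diagram A) :
  dI a `\` dI (u_ d delta a) = dI (l_ d delta a).
Proof.
apply/seteqP; split => i /=.
- move=> [ai nu]; split => //; rewrite ltNge; apply/negP => h; apply: nu; by split.
- by move=> [ai lt]; split => // -[_ h]; move: lt; rewrite ltNge h.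
Qed.

End Match.

Lemma seq_pos_lb (R : realType) (s : seq R) : (forall x, x \in s -> 0 < x) ->
  exists2 m, 0 < m & forall x, x \in s -> m <= x.
Proof.
elim: s => [|a s IH] h; first by exists 1.
have [m m0 hm] : exists2 m, 0 < m & forall x, x \in s -> m <= x.
  by apply: IH => x xs; apply: h; rewrite inE xs orbT.
exists (Num.min a m); first by rewrite lt_min m0 andbT h // inE eqxx.
move=> x; rewrite inE => /orP[/eqP ->|xs]; first by rewrite ge_min lexx.
by rewrite ge_min hm ?orbT.
Qed.

Lemma finite_pos_lb (R : realType) (D : set R) : finite_set D ->
  (forall x, D x -> 0 < x) -> exists2 m, 0 < m & forall x, D x -> m <= x.
Proof.
move=> fD hD.
have hs : forall x : R, x \in fset_set D -> 0 < x.
  by move=> x; rewrite in_fset_set // in_setE; exact: hD.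
have [m m0 hm] := seq_pos_lb hs.
by exists m => // x Dx; apply: hm; rewrite in_fset_set // in_setE.
Qed.

Lemma seq_nat_ub (s : seq nat) : exists M, forall n, n \in s -> (n <= M)%N.
Proof.
elim: s => [|a s [M hM]]; first by exists 0%N.
exists (maxn a M) => n; rewrite inE => /orP[/eqP ->|ns]; first by rewrite leq_maxl.
by rewrite (leq_trans (hM n ns)) // leq_maxr.
Qed.

Lemma finite_nat_ub (D : set nat) : finite_set D -> exists M, forall n, D n -> (n <= M)%N.
Proof.
move=> fD; have [M hM] := seq_nat_ub (fset_set D).
by exists M => n Dn; apply: hM; rewrite in_fset_set // in_setE.
Qed.

Section Tail.
Variables (R : realType) (X : Type) (d : X -> X -> \bar R) (A : set X).
Hypothesis hd : is_metric d.
Hypothesis hA : closed_in_metric d A.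
Local Open Scope ereal_scope.

Lemma esum_sub (B C : set nat) (f : nat -> \bar R) : B `<=` C ->
  (forall i, C i -> 0 <= f i) -> \esum_(i in B) f i <= \esum_(i in C) f i.
Proof.
move=> BC f0; rewrite (esum_mkcond B) (esum_mkcond C); apply: le_esum => i _.
case: ifPn => iB; last by case: ifPn => // iC; apply: f0; exact: set_mem.
by rewrite ifT ?lexx //; apply: mem_set; apply: BC; exact: set_mem.
Qed.

Lemma tail (I : set nat) (f : nat -> \bar R) (eta : R) :
  (forall i, I i -> 0 <= f i) -> \esum_(i in I) f i < +oo -> (0 < eta)%R ->
  exists J, [/\ finite_set J, J `<=` I & \esum_(i in I `\` J) f i < eta%:E].
Proof.
move=> f0 sfin e0.
have sf : \esum_(i in I) f i \is a fin_num by rewrite ge0_fin_numE // esum_ge0.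
have := ub_ereal_sup_adherent e0 sf.
move=> [_ [J [finJ JI] <-] hJ].
exists J; split => //.
have e := esumID J I f f0.
rewrite -/(esum I f) in hJ.
rewrite (setIidr JI) [X in _ = X + _]esum_fset // in e; last first.
  by move=> i iJ; apply: f0; exact: (JI _ (set_mem iJ)).
have sJf : \sum_(i \in J) f i \is a fin_num.
  rewrite ge0_fin_numE ?fsume_ge0 // ?(le_lt_trans _ sfin) //.
    by rewrite e leeDl // esum_ge0 // => i [/f0].
  by move=> i /JI /f0.
rewrite setDE; move: hJ; rewrite lteBlDr // e lteD2lE //.
Qed.

Lemma Dp_l_fin (p : R) (t : diagram A) : (0 < p)%R -> Dp d p t ->
  exists z, (forall i, dI (l_ d +oo t) i -> A (z i)) /\
   \esum_(i in dI (l_ d +oo t)) poweR (d (dx t (i)) (z i)) p < +oo.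
Proof.
move=> p0 [_ h]; have [z [hz hlt]] := Wp_zero_wit p0 h.
exists z; split => //; apply: lty_poweRy hlt.
by rewrite invr_neq0 // gt_eqF.
Qed.

Lemma Dp_u_fin (p : R) (t : diagram A) (c : R) : (0 < p)%R -> Dp d p t ->
  (0 < c)%R -> finite_set (dI (u_ d c%:E t)).
Proof.
move=> p0 tD c0; have [z [hz hlt]] := Dp_l_fin p0 tD.
have [|J [finJ JI hJ]] := tail _ hlt (powR_gt0 p c0).
  by move=> *; exact: poweR_ge0.
apply: (@sub_finite_set _ _ (dI (u_ d +oo t) `|` J)); last first.
  by rewrite finite_setU; split => //; case: tD.
move=> i /= [ti ci].
case: (pselect (distA d A (dx t i) = +oo)) => [->|ninf]; first by left; split.
right; apply: contrapT => niJ.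
have iI : dI (l_ d +oo t) i by split => //; rewrite ltey; apply/eqP.
have : poweR (d (dx t i) (z i)) p <= \esum_(i in dI (l_ d +oo t) `\` J) poweR (d (dx t i) (z i)) p.
  by apply: (esum_term (f := fun i => poweR (d (dx t i) (z i)) p)) => // *; exact: poweR_ge0.
move=> /le_lt_trans /(_ hJ); rewrite ltNge => /negP; apply.
rewrite -poweR_EFin; apply: powe_le; [exact: ltW | by rewrite lee_fin ltW |].
by apply: (le_trans ci); apply: distA_le => //; exact: hz.
Qed.

Lemma Dp_vanish (p : R) (t : diagram A) (q : R) : (0 < p)%R -> Dp d p t ->
  (0 < q)%R -> exists2 delta : R, (0 < delta)%R & exists z,
  (forall i, dI (l_ d delta%:E t) i -> A (z i)) /\
  \esum_(i in dI (l_ d delta%:E t)) poweR (d (dx t i) (z i)) p < q%:E.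
Proof.
move=> p0 tD q0; have [z [hz hlt]] := Dp_l_fin p0 tD.
have [|J [finJ JI hJ]] := tail _ hlt q0.
  by move=> *; exact: poweR_ge0.
have hpos : forall x, ((fun i => fine (distA d A (dx t i))) @` J) x -> (0 < x)%R.
  move=> _ [i iJ <-]; have [ti tl] := JI i iJ.
  have dge := @distA_ge0 R X d A hd (dx t i).
  have dfin : distA d A (dx t i) \is a fin_num by rewrite ge0_fin_numE.
  rewrite -lte_fin fineK // lt_neqAle dge andbT; apply/eqP => /esym h0.
  exact: (dxA ti (hA h0)).
have [m m0 hm] := finite_pos_lb (finite_image _ finJ) hpos.
exists m => //.
have sub : dI (l_ d m%:E t) `<=` dI (l_ d +oo t) `\` J.
  move=> i /= [ti lt]; have dfin : distA d A (dx t i) \is a fin_num.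
    by rewrite ge0_fin_numE ?distA_ge0 // (lt_trans lt) ?ltry.
  split; first by split => //; rewrite -ge0_fin_numE ?distA_ge0.
  move=> iJ; have := hm _ (ex_intro2 _ _ i iJ erefl).
  by rewrite -lee_fin fineK // leNgt lt.
exists z; split; first by move=> i /sub [] /hz.
apply: le_lt_trans hJ; apply: esum_sub => // *; exact: poweR_ge0.
Qed.

End Tail.

Section Fwd.
Variables (R : realType) (X : Type) (d : X -> X -> \bar R) (A : set X).
Hypothesis hd : is_metric d.
Local Open Scope ereal_scope.

Lemma transfer (t a : diagram A) K phi z w (rho eps : R) j :
  good d t a K phi z w rho%:E -> (0 < rho)%R -> (rho *+ 2 <= eps)%R ->
  dI a j -> eps%:E <= distA d A (dx a j) ->
  exists k, [/\ K k, phi k = j, d (dx t k) (dx a j) < rho%:E &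
                dI (u_ d rho%:E t) k].
Proof.
move=> [[hK _ _ _ hw] [h1 _ h3]] r0 re aj ej.
case: (pselect ((phi @` K) j)) => [[k Kk pk]|nj].
- have dk : d (dx t k) (dx a j) < rho%:E by rewrite -pk; exact: h1.
  exists k; split => //; split; first exact: hK.
  rewrite leNgt; apply/negP => lt.
  have : distA d A (dx a j) < (rho + rho)%:E.
    apply: le_lt_trans (distA_tri A hd (dx a j) (dx t k)) _.
    by rewrite EFinD; apply: lteD => //; rewrite (dC hd).
  by rewrite ltNge (le_trans _ ej) // lee_fin -mulr2n.
- exfalso; have := h3 j aj nj; have Aw := hw j aj nj.
  move=> dw; have : distA d A (dx a j) < eps%:E.
    apply: le_lt_trans (distA_le d _ Aw) _; rewrite (dC hd); apply: (lt_le_trans dw).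
    by rewrite lee_fin (le_trans _ re) // mulr2n lerDl ltW.
  by rewrite ltNge ej.
Qed.

Lemma fwd_uf (W : diagram A -> diagram A -> \bar R) (S : set (diagram A)) :
  (forall a b (rho : R), (0 < rho)%R -> W a b < rho%:E ->
     exists K phi z w, good d a b K phi z w rho%:E) ->
  (forall t, S t -> forall c : R, (0 < c)%R -> finite_set (dI (u_ d c%:E t))) ->
  totally_bounded_wrt W S -> unif_upper_finite d S.
Proof.
move=> HW Hfin TB eps e0.
pose rho := (eps / 2)%R.
have r0 : (0 < rho)%R by rewrite divr_gt0.
have re : (rho *+ 2 <= eps)%R by rewrite /rho -mulr_natr divfK ?pnatr_eq0.
have [F [finF FS cov]] := TB rho r0.
pose N (t : diagram A) := #|` fset_set (dI (u_ d rho%:E t))|.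
have [M hM] := finite_nat_ub (finite_image N finF).
exists M => a Sa.
have [t Ft Wta] := cov a Sa.
have [K [phi [z [w g]]]] := HW _ _ _ r0 Wta.
pose B := dI (u_ d rho%:E t).
have sub : dI (u_ d eps%:E a) `<=` phi @` (K `&` B).
  move=> j [aj ej]; have [k [Kk pk _ Bk]] := transfer g r0 re aj ej.
  by exists k.
apply: (card_le_trans (subset_card_le sub)).
apply: (card_le_trans (card_image_le _ _)).
apply: (card_le_trans (subset_card_le (@subIsetr _ K B))).
have [n Bn] := Hfin t (FS t Ft) rho r0.
have eN : N t = n := card_fset_set Bn.
by rewrite (card_le_eql Bn) card_le_II -eN; apply: hM; exists t.
Qed.

Lemma fwd_utb (W : diagram A -> diagram A -> \bar R) (S : set (diagram A)) :
  (forall a b (rho : R), (0 < rho)%R -> W a b < rho%:E ->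
     exists K phi z w, good d a b K phi z w rho%:E) ->
  (forall t, S t -> forall c : R, (0 < c)%R -> finite_set (dI (u_ d c%:E t))) ->
  totally_bounded_wrt W S -> upper_totally_bounded d S.
Proof.
move=> HW Hfin TB eps e0 r r0.
pose rho := (Num.min eps r / 2)%R.
have m0 : (0 < Num.min eps r)%R by rewrite lt_min e0 r0.
have r0' : (0 < rho)%R by rewrite divr_gt0.
have rm : (rho *+ 2 = Num.min eps r)%R by rewrite /rho -mulr_natr divfK ?pnatr_eq0.
have re : (rho *+ 2 <= eps)%R by rewrite rm ge_min lexx.
have rr : (rho *+ 2 <= r)%R by rewrite rm ge_min lexx orbT.
have [F [finF FS cov]] := TB rho r0'.
set T := [set x | exists2 a, S a & exists2 i, dI (u_ d eps%:E a) i & x = dx a i].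
pose P := \bigcup_(t in F) (dx t @` dI (u_ d rho%:E t)).
have finP : finite_set P.
  by apply: bigcup_finite => // t Ft; apply: finite_image; exact: (Hfin t (FS t Ft) rho r0').
pose Q := fun p => exists2 x, T x & d p x < rho%:E.
have hex : forall p, exists y, Q p -> T y /\ d p y < rho%:E.
  move=> p; case: (pselect (Q p)) => [[x Tx dx]|nq]; first by exists x.
  by exists p.
have [pick hpick] := choice hex.
exists (pick @` (P `&` Q)); split.
- by apply: finite_image; apply: sub_finite_set finP; exact: subIsetl.
- by move=> _ [p [_ hp] <-]; exact: (hpick p hp).1.
- move=> _ [a Sa [j [aj ej] ->]].
  have [t Ft Wta] := cov a Sa.
  have [K [phi [z [w g]]]] := HW _ _ _ r0' Wta.
  have [k [Kk pk dk Bk]] := transfer g r0' re aj ej.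
  have hp : Q (dx t k) by exists (dx a j) => //; exists a => //; exists j.
  exists (pick (dx t k)).
    by exists (dx t k) => //; split => //; exists t => //; exists k.
  have [_ dp] := hpick _ hp.
  apply: le_lt_trans (dtri hd _ (dx t k) _) _.
  apply: (lt_le_trans (y := (rho + rho)%:E)); first by rewrite EFinD lteD // (dC hd).
  by rewrite lee_fin -mulr2n.
Qed.

End Fwd.

Section Bwd.
Variables (R : realType) (X : Type) (d : X -> X -> \bar R) (A : set X).
Hypothesis hd : is_metric d.
Local Open Scope ereal_scope.

Lemma bwd_core (S : set (diagram A)) (delta eta : R) (M : nat)
    (Z : diagram A -> nat -> X) :
  (0 < eta)%R ->
  (forall a, S a -> (dI (u_ d delta%:E a) #<= `I_M)%card) ->
  totally_bounded_wrt d
    [set x | exists2 a, S a & exists2 i, dI (u_ d delta%:E a) i & x = dx a i] ->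
  (forall a, S a -> forall i, dI (l_ d delta%:E a) i -> A (Z a i)) ->
  exists F, [/\ finite_set F, F `<=` S &
   forall b, S b -> exists2 a, F a & exists phi,
     [/\ is_matching a b (dI (u_ d delta%:E a)) phi (Z a) (Z b),
         phi @` dI (u_ d delta%:E a) = dI (u_ d delta%:E b) &
         forall k, dI (u_ d delta%:E a) k ->
            d (dx a k) (dx b (phi k)) < (eta *+ 2)%:E]].
Proof.
move=> e0 hM hT hZ.
have [S0|/set0P [a0 Sa0]] := eqVneq S set0.
  by exists set0; split; [exact: finite_set0 | exact: sub0set | move=> b; rewrite S0].
set T := [set x | exists2 a, S a & exists2 i, dI (u_ d delta%:E a) i & x = dx a i].
have [G [finG GT cov]] := hT eta e0.
pose GC : set {classic X} := G.
have finGC : finite_set GC by [].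
pose gs : seq {classic X} := fset_set GC.
pose N := size gs.
have hex : forall x : X, exists m, T x -> (m < N)%N /\ d (nth (x : {classic X}) gs m) x < eta%:E.
  move=> x; case: (pselect (T x)) => [Tx|nT]; last by exists 0%N.
  have [g Gg dg] := cov x Tx.
  have gin : (g : {classic X}) \in gs by rewrite in_fset_set // in_setE.
  exists (index (g : {classic X}) gs) => _; split; first by rewrite index_mem.
  by rewrite nth_index.
have [asg hasg] := choice hex.
pose sq (a : diagram A) : seq nat := fset_set (dI (u_ d delta%:E a)).
have finu : forall a, S a -> finite_set (dI (u_ d delta%:E a)).
  by move=> a Sa; apply/finite_set_leP; exists M; exact: hM.
have memsq : forall a, S a -> forall i, (i \in sq a) = `[< dI (u_ d delta%:E a) i >].
  move=> a Sa i; rewrite (in_fset_set (finu a Sa)).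
  by apply/idP/idP => [/set_mem h|/asboolP h]; [apply/asboolP | apply: mem_set].
have sizesq : forall a, S a -> (size (sq a) <= M)%N.
  by move=> a Sa; have := geq_card_fset_set (hM a Sa).
have uniqsq : forall a, uniq (sq a) by move=> a; exact: fset_uniq.
have Tnth : forall a, S a -> forall m, (m < size (sq a))%N -> T (dx a (nth 0%N (sq a) m)).
  move=> a Sa m ms; exists a => //; exists (nth 0%N (sq a) m) => //.
  by apply/asboolP; rewrite -memsq // mem_nth.
pose val a (m : nat) := if (m < size (sq a))%N then asg (dx a (nth 0%N (sq a) m)) else N.
have valN : forall a, S a -> forall m, (val a m < N.+1)%N.
  move=> a Sa m; rewrite /val; case: ifP => h //.
  by rewrite ltnS ltnW //; have [] := hasg _ (Tnth a Sa m h).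
pose sg (a : diagram A) : {ffun 'I_M -> 'I_N.+1} := [ffun m : 'I_M => inord (val a m)].
have claim : forall a b, S a -> S b -> sg a = sg b -> exists phi,
     [/\ is_matching a b (dI (u_ d delta%:E a)) phi (Z a) (Z b),
         phi @` dI (u_ d delta%:E a) = dI (u_ d delta%:E b) &
         forall k, dI (u_ d delta%:E a) k ->
            d (dx a k) (dx b (phi k)) < (eta *+ 2)%:E].
  move=> a b Sa Sb hsg.
  have hv : forall m : 'I_M, val a m = val b m.
    move=> m; have := congr1 (fun f : {ffun 'I_M -> 'I_N.+1} => nat_of_ord (f m)) hsg.
    by rewrite /= !ffunE !inordK ?valN.
  have E1 : size (sq a) = size (sq b).
    have H : forall a b, S a -> S b -> (forall m : 'I_M, val a m = val b m) ->
        (size (sq a) <= size (sq b))%N.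
      move=> a' b' Sa' Sb' hv'; rewrite leqNgt; apply/negP => lt.
      have mM : (size (sq b') < M)%N := leq_trans lt (sizesq a' Sa').
      have := hv' (Ordinal mM); rewrite /val /= lt ltnn => e.
      by have [] := hasg _ (Tnth a' Sa' _ lt); rewrite e ltnn.
    by apply/eqP; rewrite eqn_leq !H // => m; rewrite hv.
  have E2 : forall m, (m < size (sq a))%N ->
      asg (dx a (nth 0%N (sq a) m)) = asg (dx b (nth 0%N (sq b) m)).
    move=> m ms; have mM : (m < M)%N := leq_trans ms (sizesq a Sa).
    by have := hv (Ordinal mM); rewrite /val /= ms -E1 ms.
  pose phi i := nth 0%N (sq b) (index i (sq a)).
  have Kin : forall i, dI (u_ d delta%:E a) i -> (index i (sq a) < size (sq a))%N.
    by move=> i Ki; rewrite index_mem memsq //; apply/asboolP.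
  have phiu : forall i, dI (u_ d delta%:E a) i -> dI (u_ d delta%:E b) (phi i).
    move=> i Ki; apply/asboolP; rewrite -memsq // mem_nth // -E1; exact: Kin.
  have surj : dI (u_ d delta%:E b) `<=` phi @` dI (u_ d delta%:E a).
    move=> j uj; have jin : j \in sq b by rewrite memsq //; apply/asboolP.
    have ms : (index j (sq b) < size (sq a))%N by rewrite E1 index_mem.
    exists (nth 0%N (sq a) (index j (sq b))).
      by apply/asboolP; rewrite -memsq // mem_nth.
    by rewrite /phi index_uniq // nth_index.
  exists phi; split.
  - split.
    + by move=> i [].
    + move=> i j Ki Kj e; have := Kin i Ki; have := Kin j Kj => hj hi.
      move: e; rewrite /phi => /eqP; rewrite nth_uniq // -?E1 // => /eqP e.
      have iin : i \in sq a by rewrite -index_mem.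
      have jin : j \in sq a by rewrite -index_mem.
      by rewrite -(nth_index 0%N iin) -(nth_index 0%N jin) e.
    + by move=> _ [i Ki <-]; have [] := phiu i Ki.
    + move=> i ai nK; apply: hZ => //; rewrite -set_l_u; by split.
    + move=> j bj nj; apply: hZ => //; rewrite -set_l_u; split => // uj.
      by apply: nj; apply: surj.
  - apply/seteqP; split => //; by move=> _ [i Ki <-]; exact: phiu.
  - move=> k Kk; have ks := Kin k Kk.
    have kin : k \in sq a by rewrite -index_mem.
    set m := index k (sq a) in ks *.
    have -> : dx a k = dx a (nth 0%N (sq a) m) by rewrite /m nth_index.
    rewrite /phi -/m.
    set xa := dx a (nth 0%N (sq a) m); set xb := dx b (nth 0%N (sq b) m).
    have [ha da] := hasg xa (Tnth a Sa m ks).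
    have ksb : (m < size (sq b))%N by rewrite -E1.
    have [hb db] := hasg xb (Tnth b Sb m ksb).
    have e : asg xa = asg xb by exact: E2.
    rewrite (set_nth_default xa) ?e // in db.
    rewrite e in da.
    apply: le_lt_trans (dtri hd xa (nth xa gs (asg xb)) xb) _.
    by rewrite (dC hd xa) mulr2n EFinD lteD.
pose Sig := sg @` S.
have hrep : forall s, exists a, Sig s -> S a /\ sg a = s.
  move=> s; case: (pselect (Sig s)) => [[a Sa <-]|nS]; last by exists a0.
  by exists a.
have [rep hrep'] := choice hrep.
exists (rep @` Sig); split.
- by apply: finite_image; exact: finite_finset.
- by move=> _ [s Ss <-]; exact: (hrep' s Ss).1.
- move=> b Sb; have Ss : Sig (sg b) by exists b.
  have [Sr er] := hrep' _ Ss.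
  exists (rep (sg b)); first by exists (sg b).
  exact: claim.
Qed.

End Bwd.

Section BwdInf.
Variables (R : realType) (X : Type) (d : X -> X -> \bar R) (A : set X).
Hypothesis hd : is_metric d.
Local Open Scope ereal_scope.

Lemma bwd_inf (S : set (diagram A)) : S `<=` Dinf d (A:=A) ->
  unif_upper_finite d S -> upper_totally_bounded d S ->
  totally_bounded_wrt (@Winf R X d A) S.
Proof.
move=> SD UF UTB eps e0.
pose delta := (eps / 2)%R; pose eta := (eps / 4)%R.
have d0 : (0 < delta)%R by rewrite divr_gt0.
have eta0 : (0 < eta)%R by rewrite divr_gt0.
have etad : (eta *+ 2 = delta)%R.
  by rewrite /eta /delta mulr2n; lra.
have hZex : forall a : diagram A, exists z : nat -> X, forall i,
    dI (l_ d delta%:E a) i -> A (z i) /\ d (dx a i) (z i) < delta%:E.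
  move=> a; have h : forall i, exists y, dI (l_ d delta%:E a) i ->
      A y /\ d (dx a i) y < delta%:E.
    move=> i; case: (pselect (dI (l_ d delta%:E a) i)) => [[ai lt]|n];
      last by exists (dx a i).
    by have [y Ay dy] := distA_lt lt; exists y.
  by have [z hz] := choice h; exists z.
have [Z hZ] := choice hZex.
have [M hM] := UF delta d0.
have [F [finF FS hF]] := bwd_core hd (Z := Z) eta0 hM (UTB delta d0)
  (fun a _ i li => (hZ a i li).1).
exists F; split => // b Sb.
have [a Fa [phi [hm himg hdist]]] := hF b Sb.
exists a => //=.
apply: (@le_lt_trans _ _ delta%:E); last by rewrite lte_fin ltr_pdivrMr // ltr_pMr // ltr1n.
apply: le_trans (ereal_inf_lbound _) _.
  by exists (dI (u_ d delta%:E a)), phi, (Z a), (Z b).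
apply: ge_ereal_sup => x [[[->|[k Kk <-]]|[i [ai nK] <-]]|[j [bj nj] <-]].
- by rewrite lee_fin ltW.
- by rewrite ltW // -etad; exact: hdist.
- have li : dI (l_ d delta%:E a) i by rewrite -set_l_u.
  exact: ltW (hZ a i li).2.
- have li : dI (l_ d delta%:E b) j by rewrite -set_l_u -himg.
  by rewrite (dC hd); exact: ltW (hZ b j li).2.
Qed.

End BwdInf.

Lemma sum_le_size (R : realType) (s : seq nat) (f : nat -> \bar R) (C : R) :
  (forall i, i \in s -> (f i <= C%:E)%E) ->
  (\sum_(i <- s) f i <= ((size s)%:R * C)%:E)%E.
Proof.
elim: s => [|a s IH] h; first by rewrite big_nil mul0r.
rewrite big_cons /= -add1n natrD mulrDl mul1r EFinD; apply: leeD.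
  by apply: h; rewrite inE eqxx.
by apply: IH => i iin; apply: h; rewrite inE iin orbT.
Qed.

Lemma powR_root (R : realType) (p c : R) : 0 < p -> 0 <= c -> (c `^ p^-1) `^ p = c.
Proof. by move=> p0 c0; rewrite -powRrM mulVf ?gt_eqF // powRr1. Qed.

Section BwdP.
Variables (R : realType) (X : Type) (d : X -> X -> \bar R) (A : set X).
Hypothesis hd : is_metric d.
Local Open Scope ereal_scope.

Lemma bwd_p (p : R) (S : set (diagram A)) : (1 <= p)%R -> S `<=` Dp d (A:=A) p ->
  unif_upper_finite d S -> upper_totally_bounded d S -> unif_p_vanishing d p S ->
  totally_bounded_wrt (Wp d p) S.
Proof.
move=> p1 SD UF UTB UPV eps e0.
have p0 : (0 < p)%R by apply: lt_le_trans p1.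
pose c := (eps `^ p / 3)%R.
have c0 : (0 < c)%R by rewrite divr_gt0 // powR_gt0.
pose eps0 := (c `^ p^-1)%R.
have eps00 : (0 < eps0)%R by rewrite powR_gt0.
have [delta d0 hvan] := UPV eps0 eps00.
have hZex : forall a : diagram A, exists z : nat -> X, S a ->
    (forall i, dI (l_ d delta%:E a) i -> A (z i)) /\
    \esum_(i in dI (l_ d delta%:E a)) poweR (d (dx a i) (z i)) p < c%:E.
  move=> a; case: (pselect (S a)) => [Sa|]; last by exists (dx a).
  have [z [hz hlt]] := Wp_zero_wit p0 (hvan a Sa).
  exists z => _; split => //.
  have := root_lt p0 eps00 (esum_ge0 (fun i _ => poweR_ge0 _ _)) hlt.
  by rewrite powR_root // ltW.
have [Z hZ] := choice hZex.
have [M hM] := UF delta d0.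
pose C := (c / (M.+1)%:R)%R.
have C0 : (0 < C)%R by rewrite divr_gt0.
pose eta := ((C `^ p^-1) / 2)%R.
have eta0 : (0 < eta)%R by rewrite divr_gt0 // powR_gt0.
have eta2 : (eta *+ 2 = C `^ p^-1)%R by rewrite /eta mulr2n; lra.
have [F [finF FS hF]] := bwd_core hd (Z := Z) eta0 hM (UTB delta d0)
  (fun a Sa i li => (hZ a Sa).1 i li).
exists F; split => // b Sb.
have [a Fa [phi [hm himg hdist]]] := hF b Sb.
have Sa := FS a Fa.
exists a => //=.
set K := dI (u_ d delta%:E a).
apply: le_lt_trans (ereal_inf_lbound _) _.
  by exists K, phi, (Z a), (Z b).
rewrite pcostE; apply: root_lt' => //.
  by rewrite !adde_ge0 ?sum1_ge0 ?sum2_ge0 ?sum3_ge0.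
have hs2 : sum2 d p a K (Z a) < c%:E.
  by rewrite /sum2 set_l_u; exact: (hZ a Sa).2.
have hs3 : sum3 d p b K phi (Z b) < c%:E.
  rewrite /sum3 himg set_l_u.
  under eq_esum do rewrite (dC hd).
  exact: (hZ b Sb).2.
have hs1 : sum1 d p a b K phi < c%:E.
  have finK : finite_set K by apply/finite_set_leP; exists M; exact: hM.
  rewrite /sum1 esum_fset //; last by move=> *; exact: poweR_ge0.
  rewrite fsbig_finite //=.
  apply: le_lt_trans (sum_le_size (C := C) _) _.
    move=> i iK; have Ki : K i by apply: set_mem; rewrite -(in_fset_set finK).
    apply: le_trans (powe_le (y := ((eta *+ 2)%R)%:E) (ltW p0) (dge0 hd _ _)
      (ltW (hdist i Ki))) _.
    by rewrite poweR_EFin eta2 powR_root // ltW.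
  rewrite lte_fin.
  have sz : (size (fset_set K) <= M)%N by have := geq_card_fset_set (hM a Sa).
  apply: (@le_lt_trans _ _ (M%:R * C)%R).
    by apply: ler_wpM2r; [exact: ltW | rewrite ler_nat].
  by rewrite /C mulrA ltr_pdivrMr ?ltr0n // mulrC ltr_pM2l // ltr_nat.
have -> : (eps `^ p)%R = (c + c + c)%R by rewrite /c; lra.
by rewrite !EFinD !lteD.
Qed.

End BwdP.

Lemma esum_mulle (R : realType) (P : set nat) (f : nat -> \bar R) (r : R) :
  (0 <= r)%R -> (forall i, (0 <= f i)%E) ->
  (\esum_(i in P) (r%:E * f i) <= r%:E * \esum_(i in P) f i)%E.
Proof.
move=> r0 f0; apply: ge_ereal_sup => _ [J [finJ JP] <-].
rewrite fsbig_finite //= -ge0_sume_distrr; last by move=> *; exact: f0.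
apply: lee_wpmul2l; first by rewrite lee_fin.
rewrite -fsbig_finite //; apply: ereal_sup_ubound; by exists J.
Qed.

Lemma powR_root' (R : realType) (p c : R) : 0 < p -> 0 <= c -> (c `^ p^-1) `^ p = c.
Proof. by move=> p0 c0; rewrite -powRrM mulVf ?gt_eqF // powRr1. Qed.

Section FwdVan.
Variables (R : realType) (X : Type) (d : X -> X -> \bar R) (A : set X).
Hypothesis hd : is_metric d.
Hypothesis hA : closed_in_metric d A.
Local Open Scope ereal_scope.

Lemma fwd_van (p : R) (S : set (diagram A)) : (1 <= p)%R -> S `<=` Dp d (A:=A) p ->
  totally_bounded_wrt (Wp d p) S -> unif_p_vanishing d p S.
Proof.
move=> p1 SD TB eps e0.
have p0 : (0 < p)%R by apply: lt_le_trans p1.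
pose K0 := (2 `^ p)%R.
have K01 : (1 <= K0)%R.
  by apply: le_trans (le1r_powR _ p1); rewrite ?ler1n.
have K00 : (0 < K0)%R by apply: lt_le_trans K01.
pose c := (eps `^ p)%R.
have c0 : (0 < c)%R by rewrite powR_gt0.
pose q := (c / (K0 * 2))%R.
have q0 : (0 < q)%R by rewrite divr_gt0 // mulr_gt0.
pose rho := (q `^ p^-1)%R.
have rho0 : (0 < rho)%R by rewrite powR_gt0.
have [F [finF FS cov]] := TB rho rho0.
have hvex : forall t : diagram A, exists dz : R * (nat -> X), S t ->
   [/\ (0 < dz.1)%R, (forall i, dI (l_ d dz.1%:E t) i -> A (dz.2 i)) &
    \esum_(i in dI (l_ d dz.1%:E t)) poweR (d (dx t i) (dz.2 i)) p < q%:E].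
  move=> t; case: (pselect (S t)) => [St|]; last by exists (1%R, dx t).
  have [dl dl0 [z [hz hs]]] := Dp_vanish hd hA p0 (SD t St) q0.
  by exists (dl, z).
have [dz hdz] := choice hvex.
have hpos : forall x, ((fun t => (dz t).1) @` F) x -> (0 < x)%R.
  by move=> _ [t Ft <-]; have [] := hdz t (FS t Ft).
have [m m0 hm] := finite_pos_lb (finite_image _ finF) hpos.
pose dl := (m / 2)%R.
exists dl; first by rewrite divr_gt0.
move=> a Sa.
have [t Ft Wta] := cov a Sa.
have St := FS t Ft.
have [K [phi [z [w [[[hK hinj himg hz hw] [h1 h2 h3]] hsum]]]]] := Wp_good hd p0 rho0 Wta.
have [dt0 hzA hzs] := hdz t St.
have mdt : (m <= (dz t).1)%R by apply: hm; exists t.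
have dl2 : (dl *+ 2 = m)%R by rewrite /dl mulr2n; lra.
pose L := dI (l_ d (dl *+ 2)%:E t).
have LLt : L `<=` dI (l_ d (dz t).1%:E t).
  move=> k [tk lk]; split => //; apply: lt_le_trans lk _.
  by rewrite lee_fin dl2.
pose cc k := if k \in L then d (dx t k) ((dz t).2 k) else 0.
have cc0 : forall k, 0 <= cc k.
  by move=> k; rewrite /cc; case: ifP => _; [exact: dge0|exact: lexx].
have hpsi : forall j, exists k, (phi @` K) j -> K k /\ phi k = j.
  move=> j; case: (pselect ((phi @` K) j)) => [[k Kk pk]|nj]; last by exists 0%N => hj; case: (nj hj).
  by exists k.
have [psi hpsi'] := choice hpsi.
pose g j := (if j \in dI a `\` phi @` K then poweR (d (w j) (dx a j)) p else 0) +
  (if j \in phi @` K then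
     K0%:E * (poweR (d (dx t (psi j)) (dx a j)) p + poweR (cc (psi j)) p) else 0).
have g0 : forall j, 0 <= g j.
  move=> j; rewrite /g; apply: adde_ge0; case: ifP => _ //; first exact: poweR_ge0.
  by apply: mule_ge0; [rewrite lee_fin ltW | apply: adde_ge0; exact: poweR_ge0].
have hex : forall j, exists y, dI (l_ d dl%:E a) j ->
    A y /\ poweR (d (dx a j) y) p <= g j.
  move=> j; case: (pselect (dI (l_ d dl%:E a) j)) => [[aj lj]|nl];
    last by exists (dx a j) => h; case: (nl h).
  case: (pselect ((phi @` K) j)) => [hj|nj].
  - have [Kk pk] := hpsi' j hj.
    have gE : g j = K0%:E * (poweR (d (dx t (psi j)) (dx a j)) p + poweR (cc (psi j)) p).
      by rewrite /g (mem_set hj) memNset ?add0e // => -[].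
    rewrite gE; move: Kk pk; set k := psi j => Kk pk.
    have tk := hK k Kk.
    case: (pselect (L k)) => [Lk|nL].
    + exists ((dz t).2 k); split; first exact: hzA _ (LLt _ Lk).
      have ccE : cc k = d (dx t k) ((dz t).2 k) by rewrite /cc mem_set.
      rewrite ccE; apply: le_trans (powe_addle p0 (dge0 hd _ _) (dge0 hd _ _)).
      apply: powe_le; [exact: ltW | exact: dge0 | ].
      by apply: le_trans (dtri hd (dx a j) (dx t k) _) _; rewrite (dC hd (dx a j)).
    + have ccE : cc k = 0 by rewrite /cc memNset.
      have dk : (dl *+ 2)%:E <= distA d A (dx t k).
        by rewrite leNgt; apply/negP => lt; apply: nL; split.
      have lt : distA d A (dx a j) < d (dx t k) (dx a j).
        rewrite ltNge; apply/negP => le.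
        have tri := distA_tri A hd (dx t k) (dx a j).
        have : distA d A (dx t k) < (dl *+ 2)%:E.
          apply: le_lt_trans tri _; rewrite mulr2n EFinD.
          by apply: le_lt_trans (leeD le (lexx _)) _; exact: lteD.
        by rewrite ltNge dk.
      have [y Ay dy] := distA_lt lt.
      exists y; split => //.
      rewrite ccE poweR0r ?gt_eqF // adde0.
      apply: le_trans (lee_pemull (poweR_ge0 _ _) _); last by rewrite lee_fin.
      by apply: powe_le; [exact: ltW | exact: dge0 | exact: ltW].
  - exists (w j); split; first exact: hw j aj nj.
    have hj : (dI a `\` phi @` K) j by split.
    by rewrite /g (mem_set hj) memNset // adde0 (dC hd).
have [zz hzz] := choice hex.
apply: le_lt_trans (@Wp_zero_le R X d A p (l_ d dl%:E a) a zz _) _.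
  by move=> i li; exact: (hzz i li).1.
apply: root_lt' => //; first by apply: esum_ge0 => *; exact: poweR_ge0.
apply: (@le_lt_trans _ _ (\esum_(j in dI (l_ d dl%:E a)) g j)).
  by apply: le_esum => j lj; exact: (hzz j lj).2.
apply: (@le_lt_trans _ _ (\esum_(j in [set: nat]) g j)).
  by apply: esum_sub => // j _; exact: g0.
rewrite /g esumD; first last.
- by move=> j _; case: ifP => _ //; apply: mule_ge0;
    [rewrite lee_fin ltW | apply: adde_ge0; exact: poweR_ge0].
- by move=> j _; case: ifP => _ //; exact: poweR_ge0.
rewrite -[X in X + _]esum_mkcond -esum_mkcond.
have bij : set_bij K (phi @` K) phi.
  by apply: inj_bij => i j /set_mem Ki /set_mem Kj; exact: hinj.
rewrite (@reindex_esum R _ _ K (phi @` K) phi _ bij).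
have psiK : forall k, K k -> psi (phi k) = k.
  move=> k Kk; have [Kk' e] := hpsi' (phi k) (ex_intro2 _ _ k Kk erefl).
  exact: hinj.
rewrite [X in _ + X](eq_esum (b := fun k => K0%:E *
   (poweR (d (dx t k) (dx a (phi k))) p + poweR (cc k) p))); last first.
  by move=> k Kk; rewrite psiK.
apply: (le_lt_trans (leeD (lexx _) (esum_mulle _ _ _))); first exact: ltW.
  by move=> k; apply: adde_ge0; exact: poweR_ge0.
rewrite esumD; last 2 first.
  by move=> *; exact: poweR_ge0.
  by move=> *; exact: poweR_ge0.
have hcc : \esum_(k in K) poweR (cc k) p < q%:E.
  apply: le_lt_trans hzs.
  rewrite esum_mkcond [X in _ <= X]esum_mkcond; apply: le_esum => k _.
  case: (pselect (L k)) => [Lk|nL].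
    rewrite /cc (mem_set Lk) (mem_set (LLt _ Lk)).
    by case: ifP => _; [exact: lexx | exact: poweR_ge0].
  rewrite /cc (memNset nL) poweR0r ?gt_eqF //.
  by case: ifP => _; [case: ifP => _; [exact: poweR_ge0|exact: lexx] | case: ifP => _; [exact: poweR_ge0|exact: lexx]].
set s1 := \esum_(k in K) _ in hcc *.
have hs13 : sum1 d p t a K phi + sum3 d p a K phi w < q%:E.
  move: hsum; rewrite powR_root' // ?ltW //; apply: le_lt_trans.
  rewrite -addeA (addeC (sum2 _ _ _ _ _)) addeA leeDl //; exact: sum2_ge0.
have le1 : sum3 d p a K phi w <= K0%:E * sum3 d p a K phi w.
  by apply: lee_pemull; [exact: sum3_ge0 | rewrite lee_fin].
rewrite -/(sum3 d p a K phi w).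
apply: le_lt_trans (leeD le1 (lexx _)) _.
rewrite -ge0_muleDr; first last.
- by apply: adde_ge0; [exact: sum1_ge0 | apply: esum_ge0 => *; exact: poweR_ge0].
- exact: sum3_ge0.
have -> : (eps `^ p = K0 * (q + q))%R.
  rewrite /q -/c; field; rewrite ?mulf_neq0 ?gt_eqF ?pnatr_eq0 //.
rewrite EFinM lte_pmul2l //.
rewrite addeA (addeC (sum3 d p a K phi w)) EFinD; exact: lteD.
Qed.

End FwdVan.

Unset Implicit Arguments.
Set Strict Implicit.

Theorem theorem7p29 (R : realType) (X : Type) (d : X -> X -> \bar R)
    (A : set X) (hd : is_metric d) (hA : closed_in_metric d A) :
  (forall S : set (diagram A), S `<=` Dinf d (A:=A) ->
     (totally_bounded_wrt (@Winf R X d A) S <->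
      unif_upper_finite d S /\ upper_totally_bounded d S)) /\
  (forall p : R, 1 <= p -> forall S : set (diagram A), S `<=` Dp d (A:=A) p ->
     (totally_bounded_wrt (Wp d p) S <->
      [/\ unif_upper_finite d S, upper_totally_bounded d S &
          unif_p_vanishing d p S])).
Proof.
split.
- move=> S SD; split.
  + move=> TB.
    have HW : forall (a b : diagram A) (rho : R), 0 < rho -> (Winf d a b < rho%:E)%E ->
        exists K phi z w, good d a b K phi z w rho%:E.
      by move=> a b rho r0 h; exact: Winf_good h.
    have Hfin : forall t, S t -> forall c : R, 0 < c -> finite_set (dI (u_ d c%:E t)).
      by move=> t St c c0; exact: (SD t St c c0).
    by split; [exact: (fwd_uf hd HW Hfin TB) | exact: (fwd_utb hd HW Hfin TB)].
  + by move=> [UF UTB]; have := bwd_inf hd SD UF UTB.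
- move=> p p1 S SD; have p0 : 0 < p by apply: lt_le_trans p1.
  split.
  + move=> TB.
    have HW : forall (a b : diagram A) (rho : R), 0 < rho -> (Wp d p a b < rho%:E)%E ->
        exists K phi z w, good d a b K phi z w rho%:E.
      move=> a b rho r0 h; have [K [phi [z [w [g _]]]]] := Wp_good hd p0 r0 h.
      by exists K, phi, z, w.
    have Hfin : forall t, S t -> forall c : R, 0 < c -> finite_set (dI (u_ d c%:E t)).
      by move=> t St c c0; exact: (Dp_u_fin p0 (SD t St) c0).
    split; [exact: (fwd_uf hd HW Hfin TB) | exact: (fwd_utb hd HW Hfin TB) |].
    exact: (fwd_van hd hA p1 SD TB).
  + by move=> [UF UTB UPV]; have := bwd_p hd p1 SD UF UTB UPV.
Qed.
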